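(* For every $n\ge 1$, there are at least $((n-1)!)^n/(n!)$ pairwise non-isomorphic port-labeled cliques (complete graphs) of size $n$.
   Context: A port-labeled graph is a finite simple undirected graph without node labels in which, at each node of degree $d$, the incident edges carry distinct port numbers $0,\dots,d-1$. Two port-labeled graphs are isomorphic if there is a bijection of nodes mapping each edge $\{u,v\}$ with port $p$ at $u$ and $q$ at $v$ to an edge with port $p$ at the image of $u$ and $q$ at the image of $v$, and conversely. *)

(* Defs.v *)
From mathcomp Require Import all_boot all_order all_fingroup all_algebra.
Set Implicit Arguments. Unset Strict Implicit. Unset Printing Implicit Defensive.

(* A port-labeled graph with node set 'I_n: an adjacency relation and, for
   each node u and neighbour v, the port number of edge {u,v} at u.
   (Values of [pl_port u v] for non-adjacent u v are irrelevant.) *)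
Record plgraph (n : nat) := PLGraph {
  pl_adj : rel 'I_n;
  pl_port : 'I_n -> 'I_n -> nat
}.

Definition pl_deg n (G : plgraph n) (u : 'I_n) : nat :=
  #|[set v | pl_adj G u v]|.

Definition pl_wf n (G : plgraph n) : Prop :=
  [/\ forall u v, pl_adj G u v = pl_adj G v u,
      forall u, ~~ pl_adj G u u,
      forall u v, pl_adj G u v -> pl_port G u v < pl_deg G u
    & forall u v w, pl_adj G u v -> pl_adj G u w ->
        pl_port G u v = pl_port G u w -> v = w].

Definition pl_clique n (G : plgraph n) : Prop :=
  pl_wf G /\ (forall u v, pl_adj G u v = (u != v)).

Definition pl_iso n (G H : plgraph n) : Prop :=
  exists f : {perm 'I_n},
    (forall u v, pl_adj H (f u) (f v) = pl_adj G u v) /\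
    (forall u v, pl_adj G u v -> pl_port H (f u) (f v) = pl_port G u v).

(* Main.v *)
Require Import Defs.
From mathcomp Require Import all_boot all_order all_fingroup all_algebra.
From mathcomp Require Import zify.
Import Order.TTheory GRing.Theory Num.Theory.

Section S.
Variable n : nat.
Definition lab := {ffun 'I_n -> {perm 'I_n}}.
Definition Lset : {set lab} := [set f : lab | [forall u, f u \in perm_on [set~ u]]].
Definition P (f : lab) (u v : 'I_n) : nat := unbump u (f u v).
Definition G (f : lab) : plgraph n := PLGraph (fun u v : 'I_n => u != v) (P f).

Lemma L_fix f u : f \in Lset -> f u u = u.
Proof.
rewrite inE => /forallP /(_ u) H; apply: (out_perm H); by rewrite !inE eqxx.
Qed.

Lemma L_ne f u v : f \in Lset -> u != v -> f u v != u.
Proof.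
move=> Lf uv; apply/eqP => E.
have : f u v = f u u by rewrite E L_fix.
by move/perm_inj => E2; rewrite E2 eqxx in uv.
Qed.

Lemma unbump_inj (u : 'I_n) (x y : 'I_n) : x != u -> y != u ->
  unbump u x = unbump u y -> x = y.
Proof.
move=> xu yu E; apply: val_inj.
have := congr1 (bump u) E; rewrite !unbumpK ?inE //.
Qed.

Lemma L_inj f g : f \in Lset -> g \in Lset ->
  (forall u v, u != v -> P f u v = P g u v) -> f = g.
Proof.
move=> Lf Lg H; apply/ffunP => u; apply/permP => v.
case: (eqVneq u v) => [<-|uv]; first by rewrite !L_fix.
exact: (unbump_inj _ _ _ (L_ne _ _ _ Lf uv) (L_ne _ _ _ Lg uv) (H _ _ uv)).
Qed.

Lemma card_set1C (u : 'I_n) : #|[set v | u != v]| = n.-1.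
Proof.
have -> : [set v | u != v] = [set~ u].
  by apply/setP => v; rewrite !inE eq_sym.
by rewrite cardsC1 card_ord.
Qed.

Lemma G_clique f : f \in Lset -> pl_clique (G f).
Proof.
move=> Lf; split=> //; split => /=.
- by move=> u v; rewrite eq_sym.
- by move=> u; rewrite eqxx.
- move=> u v uv; rewrite /pl_deg /= card_set1C /P.
  have h3 : nat_of_ord (f u v) != nat_of_ord u by exact: (L_ne _ _ _ Lf uv).
  have := ltn_ord (f u v); have := ltn_ord u.
  rewrite /unbump; move: (nat_of_ord (f u v)) (nat_of_ord u) h3 => a b.
  move=> /eqP h3 h1 h2. case: (ltnP b a) => /= h; lia.
- move=> u v w uv uw E; apply: (@perm_inj _ (f u)).
  exact: (unbump_inj _ _ _ (L_ne _ _ _ Lf uv) (L_ne _ _ _ Lf uw) E).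
Qed.

Definition W (a b : lab) (p : {perm 'I_n}) :=
  [forall u, forall v, (u != v) ==> (P b (p u) (p v) == P a u v)].
Definition isob a b := [exists p, W a b p].

Lemma WP a b (p : {perm 'I_n}) : reflect (forall u v, u != v -> P b (p u) (p v) = P a u v) (W a b p).
Proof.
apply: (iffP forallP) => [H u v uv | H u].
  by have /forallP /(_ v) /implyP /(_ uv) /eqP := H u.
by apply/forallP => v; apply/implyP => uv; apply/eqP; apply: H.
Qed.

Lemma isob_sym a b : isob a b -> isob b a.
Proof.
move=> /existsP [p /WP H]; apply/existsP; exists (p^-1)%g; apply/WP => u v uv.
rewrite -H ?permKV //.
by apply: contra uv => /eqP /perm_inj ->.
Qed.

Lemma isob_trans a b c : isob a b -> isob b c -> isob a c.
Proof.
move=> /existsP [p /WP H1] /existsP [q /WP H2]; apply/existsP; exists (p * q)%g.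
apply/WP => u v uv; rewrite !permM H2 ?H1 //.
by apply: contra uv => /eqP /perm_inj ->.
Qed.

Lemma iso_isob a b : pl_iso (G a) (G b) -> isob a b.
Proof.
move=> [p [_ H]]; apply/existsP; exists p; apply/WP => u v uv.
exact: (H u v uv).
Qed.

Definition Rset : {set lab} :=
  [set r in Lset | [forall g, ((g \in Lset) && isob g r) ==> (enum_rank r <= enum_rank g)]].

Lemma isob_refl a : isob a a.
Proof. by apply/existsP; exists 1%g; apply/WP => u v _; rewrite !perm1. Qed.

Definition rep (f : lab) : lab :=
  [arg min_(g < f | (g \in Lset) && isob g f) enum_rank g].

Lemma rep_spec f : f \in Lset -> [/\ rep f \in Rset & isob (rep f) f].
Proof.
move=> Lf; rewrite /rep; case: arg_minnP; first by rewrite Lf isob_refl.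
move=> r /andP [Lr rf] Hmin; split=> //.
rewrite inE Lr /=; apply/forallP => g; apply/implyP => /andP [Lg gr].
apply: Hmin; rewrite Lg /=; exact: isob_trans gr rf.
Qed.

Lemma R_uniq r s : r \in Rset -> s \in Rset -> isob r s -> r = s.
Proof.
rewrite [r \in Rset]inE [s \in Rset]inE => /andP [Lr /forallP Hr] /andP [Ls /forallP Hs] rs.
have h1 : enum_rank s <= enum_rank r by apply: (implyP (Hs r)); rewrite Lr rs.
have h2 : enum_rank r <= enum_rank s.
  by apply: (implyP (Hr s)); rewrite Ls (isob_sym _ _ rs).
apply: enum_rank_inj; apply: val_inj => /=.
by apply/eqP; rewrite eqn_leq h1 h2.
Qed.

Definition wit (r f : lab) : {perm 'I_n} := odflt 1%g [pick p | W r f p].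

Lemma wit_spec r f : isob r f -> W r f (wit r f).
Proof.
move=> /existsP [p Hp]; rewrite /wit; case: pickP => //= /(_ p).
by rewrite Hp.
Qed.

Lemma card_L : #|Lset| = (n.-1)`! ^ n.
Proof.
have -> : #|Lset| = #|(family (fun u : 'I_n => mem (perm_on [set~ u])) : simpl_pred lab)|.
  by apply: eq_card => f; rewrite inE; apply/forallP/familyP.
rewrite card_family.
have E : forall s : seq 'I_n, foldr muln 1 [seq #|mem (perm_on [set~ x])| | x <- s] = (n.-1)`! ^ size s.
  elim=> [|x s IH] //=; by rewrite IH card_perm cardsC1 card_ord expnS.
by rewrite /image_mem E size_map -enumT size_enum_ord.
Qed.

Lemma count_bound : (n.-1)`! ^ n <= #|Rset| * n`!.
Proof.
rewrite -card_L.
pose h (f : lab) := (rep f, wit (rep f) f).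
have hinj : {in Lset &, injective h}.
  move=> f g Lf Lg [E1 E2].
  have [Rf rf] := rep_spec _ Lf; have [Rg rg] := rep_spec _ Lg.
  have /WP Hf := wit_spec _ _ rf; have /WP Hg := wit_spec _ _ rg.
  rewrite -E1 in E2 Hg; rewrite -E2 in Hg.
  apply: L_inj => // u v uv.
  set p := wit (rep f) f in Hf Hg.
  have uv' : (p^-1)%g u != (p^-1)%g v by apply: contra uv => /eqP /perm_inj ->.
  by have := Hf _ _ uv'; have := Hg _ _ uv'; rewrite !permKV => -> ->.
rewrite -(card_in_imset hinj).
have -> : #|Rset| * n`! = #|setX Rset [set: {perm 'I_n}]|.
  by rewrite cardsX cardsT -card_Sn.
apply: subset_leq_card; apply/subsetP => x /imsetP [f Lf ->].
by rewrite inE /= (rep_spec _ Lf).1 inE.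
Qed.

End S.

Theorem lemma5p2 (n : nat) (hn : (1 <= n)%N) :
  exists (m : nat) (F : 'I_m -> plgraph n),
    [/\ forall i, pl_clique (F i),
        forall i j, i != j -> ~ pl_iso (F i) (F j)
      & ((((n.-1)`! ^ n)%:R / (n`!)%:R : rat) <= m%:R)%R].
Proof.
exists #|Rset n|, (fun i : 'I_#|Rset n| => G n (enum_val i)); split.
- move=> i; apply: G_clique; have := enum_valP i; rewrite inE => /andP [] //.
- move=> i j ij /iso_isob H; move: ij; apply/negP; rewrite negbK.
  apply/eqP/enum_val_inj; apply: R_uniq H; exact: enum_valP.
- rewrite ler_pdivrMr ?ltr0n ?fact_gt0 // -natrM ler_nat; exact: count_bound.
Qed.
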